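(* Consider the discrete-time linear time-invariant system $$x_{k+1}=Ax_k+Bu_k,\qquad y_k=Cx_k+Du_k,$$ with $x_k\in\mathbb{R}^n$, $u_k\in\mathbb{R}^m$, $y_k\in\mathbb{R}^p$, unknown matrices $(A,B,C,D)$, $(A,B)$ controllable and $(A,C)$ observable. Let $l\geq \underline{l}$ be an integer, where $\underline{l}$ is the lag of the system, and let $\xi_t=\begin{bmatrix}u_{[t-l,t-1]}\\ y_{[t-l,t-1]}\end{bmatrix}\in\mathbb{R}^{n_\xi}$, $n_\xi=(m+p)l$, be the extended state, which evolves according to the extended dynamics $\xi_{k+1}=\tilde A\xi_k+\tilde Bu_k$, $y_k=\tilde C\xi_k+\tilde Du_k$ described in the context. Let $\{u_k^d,y_k^d\}_{k=0}^{N-1}$ be an input-output trajectory of the system, let $\mathbb{U}\subseteq\mathbb{R}^m$, $\mathbb{Y}\subseteq\mathbb{R}^p$ be constraint sets, let $(u^s,y^s)\in\mathrm{int}(\mathbb{U}\times\mathbb{Y})$ be an equilibrium of the system with corresponding extended steady state $\xi^s=\begin{bmatrix}u^s\\ \vdots\\ u^s\\ y^s\\ \vdots\\ y^s\end{bmatrix}$, let $Q\succ0$, $R\succ0$, and let $L\in\mathbb{I}_{\geq1}$. Suppose that: (A1) there exist $P=P^\top\succ0$, $K\in\mathbb{R}^{m\times n_\xi}$ and a set $\Xi_f\subseteq\mathbb{U}^l\times\mathbb{Y}^l$ with $\xi^s\in\mathrm{int}(\Xi_f)$ such that for all $\xi\in\Xi_f$, with $u=u^s+K(\xi-\xi^s)$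 and $y=\tilde C\xi+\tilde Du$, we have (i) $\tilde A\xi+\tilde Bu\in\Xi_f$; (ii) $u\in\mathbb{U}$ and $y\in\mathbb{Y}$; (iii) $\lVert(\tilde A+\tilde BK)(\xi-\xi^s)\rVert_P^2\leq\lVert\xi-\xi^s\rVert_P^2-\lVert\xi-\xi^s\rVert_{K^\top RK}^2-\lVert y-y^s\rVert_Q^2$; (A2) there exists $c_u>0$ such that $J_L^*(\xi)\leq c_u\lVert\xi-\xi^s\rVert_2^2$ for all $\xi$ for which the optimal control problem below is feasible; (A3) the input $u^d$ is persistently exciting of order $L+l+n$. At each time $t\in\mathbb{I}_{\geq0}$, given the past $l$ closed-loop measurements $u_{[t-l,t-1]}$, $y_{[t-l,t-1]}$ (i.e., $\xi_t$), solve $$\min_{\alpha(t),\bar u(t),\bar y(t)}\ \sum_{k=0}^{L-1}\Big(\lVert\bar u_k(t)-u^s\rVert_R^2+\lVert\bar y_k(t)-y^s\rVert_Q^2\Big)+\lVert\bar\xi_L(t)-\xi^s\rVert_P^2$$ subject to $\begin{bmatrix}\bar u_{[-l,L-1]}(t)\\ \bar y_{[-l,L-1]}(t)\end{bmatrix}=\begin{bmatrix}H_{L+l}(u^d)\\ H_{L+l}(y^d)\end{bmatrix}\alpha(t)$, $\ \begin{bmatrix}\bar u_{[-l,-1]}(t)\\ \bar y_{[-l,-1]}(t)\end{bmatrix}=\begin{bmatrix}u_{[t-l,t-1]}\\ y_{[t-l,t-1]}\end{bmatrix}$, $\ \bar\xi_L(t)=\begin{bmatrix}\bar u_{[L-l,L-1]}(t)\\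 \bar y_{[L-l,L-1]}(t)\end{bmatrix}\in\Xi_f$, and $\bar u_k(t)\in\mathbb{U}$, $\bar y_k(t)\in\mathbb{Y}$ for $k\in\mathbb{I}_{[0,L-1]}$, and apply $u_t=\bar u_0^*(t)$, where $\bar u^*(t)$ is an optimal solution; $J_L^*(\xi_t)$ denotes the optimal value. If this problem is feasible at the initial time $t=0$, then (i) it is feasible at every $t\in\mathbb{I}_{\geq0}$; (ii) the closed-loop trajectory satisfies $u_t\in\mathbb{U}$ and $y_t\in\mathbb{Y}$ for all $t\in\mathbb{I}_{\geq0}$; (iii) the equilibrium $\xi^s$ is exponentially stable for the resulting closed loop (in the extended state $\xi_t$).
   Context: Notation: $\mathbb{I}_{[a,b]}$ is the set of integers in $[a,b]$, $\mathbb{I}_{\geq0}$ the nonnegative integers; $\lVert x\rVert_P^2=x^\top Px$. For a sequence $\{x_k\}_{k=0}^{N-1}$, $x_{[a,b]}=\begin{bmatrix}x_a^\top&\dots&x_b^\top\end{bmatrix}^\top$ and $x=x_{[0,N-1]}$. The Hankel matrix of depth $L$ is $H_L(x)=\begin{bmatrix}x_0&x_1&\dots&x_{N-L}\\ x_1&x_2&\dots&x_{N-L+1}\\ \vdots&&&\vdots\\ x_{L-1}&x_L&\dots&x_{N-1}\end{bmatrix}$. A sequence $\{u_k,y_k\}$ is a trajectory of the system if there is an initial state $x_0$ such that the system equations hold. $\{u_k\}_{k=0}^{N-1}$, $u_k\in\mathbb{R}^m$, is persistently exciting of order $L$ if $\mathrm{rank}(H_L(u))=mL$. The lag $\underline{l}$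 is the smallest $l\in\mathbb{I}_{[1,n]}$ such that $\Phi_l=\begin{bmatrix}C^\top&(CA)^\top&\dots&(CA^{l-1})^\top\end{bmatrix}^\top$ has rank $n$. $(u^s,y^s)$ is an equilibrium if the constant sequence $(\bar u_k,\bar y_k)=(u^s,y^s)$, $k\in\mathbb{I}_{[0,\underline{l}]}$, is a trajectory of the system. Extended dynamics: for $l\geq\underline{l}$ there exist matrices $G_1,\dots,G_l\in\mathbb{R}^{p\times m}$, $F_1,\dots,F_l\in\mathbb{R}^{p\times p}$ such that every trajectory satisfies $y_k=\sum_{i=1}^l G_iu_{k-i}+\sum_{i=1}^l F_iy_{k-i}+Du_k$; correspondingly $\xi_{k+1}=\tilde A\xi_k+\tilde Bu_k$, $y_k=\tilde C\xi_k+\tilde Du_k$, where $\tilde A$ shifts the input blocks and output blocks of $\xi_k$ up by one (dropping $u_{k-l}$, $y_{k-l}$), sets the new last input block to $0$ and the new last output block to $\tilde C\xi_k$, with $\tilde C=\begin{bmatrix}G_l&\dots&G_1&F_l&\dots&F_1\end{bmatrix}$, $\tilde D=D$, and $\tilde B$ has $I$ in the last input block, $D$ in the last output block and zeros elsewhere. The closed-loop extended state is $\xi_t=\begin{bmatrix}u_{[t-l,t-1]}^\top& y_{[t-l,t-1]}^\top\end{bmatrix}^\top$. *)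

(* Defs.v *)
From HB Require Import structures.
From mathcomp Require Import all_boot all_order all_algebra.
From mathcomp Require Import boolp classical_sets reals.
Set Implicit Arguments. Unset Strict Implicit. Unset Printing Implicit Defensive.
Import Order.TTheory GRing.Theory Num.Theory.
Local Open Scope ring_scope.

Section Defs.
Variable R : realType.

Definition blkrow (k d1 d2 : nat) (M : 'I_k -> 'M[R]_(d1, d2)) : 'M[R]_(d1, k * d2) :=
  \matrix_(r < d1) mxvec (\matrix_(i < k, j < d2) M i r j).
Definition blkcol (k d1 d2 : nat) (M : 'I_k -> 'M[R]_(d1, d2)) : 'M[R]_(k * d1, d2) :=
  (blkrow (fun i => (M i)^T))^T.
Definition blkmx (k d1 d2 : nat) (M : 'I_k -> 'I_k -> 'M[R]_(d1, d2)) : 'M[R]_(k * d1, k * d2) :=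
  blkcol (fun i => blkrow (fun j => M i j)).
Definition blk (k d : nat) (i : 'I_k) (v : 'cV[R]_(k * d)) : 'cV[R]_d :=
  \col_(j < d) v (mxvec_index i j) ord0.

Definition seg (d : nat) (x : nat -> 'cV[R]_d) (a k : nat) : 'cV[R]_(k * d) :=
  blkcol (fun i : 'I_k => x (a + i)%N).

Definition hankel (d : nat) (L N : nat) (x : nat -> 'cV[R]_d) : 'M[R]_(L * d, (N - L).+1) :=
  \matrix_(r < L * d, c < (N - L).+1) (seg x c L) r ord0.

(* persistency of excitation of order L (the Hankel matrix H_L(u) requires L <= N) *)
Definition pers_exc (m : nat) (N L : nat) (u : nat -> 'cV[R]_m) : Prop :=
  (L <= N)%N /\ \rank (hankel L N u) = (m * L)%N.

Definition controllable (n m : nat) (A : 'M[R]_n) (B : 'M[R]_(n, m)) : Prop :=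
  \rank (blkrow (fun i : 'I_n => A ^+ i *m B)) = n.

Definition obsv_mx (n p : nat) (A : 'M[R]_n) (C : 'M[R]_(p, n)) (l : nat) : 'M[R]_(l * p, n) :=
  blkcol (fun i : 'I_l => C *m A ^+ i).

Definition observable (n p : nat) (A : 'M[R]_n) (C : 'M[R]_(p, n)) : Prop :=
  \rank (obsv_mx A C n) = n.

Definition is_lag (n p : nat) (A : 'M[R]_n) (C : 'M[R]_(p, n)) (lg : nat) : Prop :=
  [/\ (1 <= lg <= n)%N, \rank (obsv_mx A C lg) = n &
      forall l', (1 <= l')%N -> (l' < lg)%N -> \rank (obsv_mx A C l') <> n].

Definition is_traj (n m p : nat) (A : 'M[R]_n) (B : 'M[R]_(n, m)) (C : 'M[R]_(p, n))
  (D : 'M[R]_(p, m)) (N : nat) (u : nat -> 'cV[R]_m) (y : nat -> 'cV[R]_p) : Prop :=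
  exists x : nat -> 'cV[R]_n,
    (forall k, (k < N)%N -> y k = C *m x k + D *m u k) /\
    (forall k, (k.+1 < N)%N -> x k.+1 = A *m x k + B *m u k).

Definition is_equilibrium (n m p : nat) (A : 'M[R]_n) (B : 'M[R]_(n, m)) (C : 'M[R]_(p, n))
  (D : 'M[R]_(p, m)) (lg : nat) (us : 'cV[R]_m) (ys : 'cV[R]_p) : Prop :=
  is_traj A B C D lg.+1 (fun _ => us) (fun _ => ys).

(* G_1..G_l, F_1..F_l (G i = G_(i+1)) describe the extended dynamics *)
Definition ext_dyn (n m p l : nat) (A : 'M[R]_n) (B : 'M[R]_(n, m)) (C : 'M[R]_(p, n))
  (D : 'M[R]_(p, m)) (G : 'I_l -> 'M[R]_(p, m)) (F : 'I_l -> 'M[R]_(p, p)) : Prop :=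
  forall N u y, is_traj A B C D N u y ->
    forall k, (l <= k)%N -> (k < N)%N ->
      y k = \sum_(i < l) G i *m u (k - i.+1)%N + \sum_(i < l) F i *m y (k - i.+1)%N + D *m u k.

Definition shift_mx (l d : nat) : 'M[R]_(l * d) :=
  blkmx (fun i j : 'I_l => if (j : nat) == i.+1 then (1%:M : 'M[R]_d) else 0).
Definition last_mx (l d : nat) : 'M[R]_(l * d, d) :=
  blkcol (fun i : 'I_l => if (i : nat) == l.-1 then (1%:M : 'M[R]_d) else 0).

Definition Ct_u (p m l : nat) (G : 'I_l -> 'M[R]_(p, m)) : 'M[R]_(p, l * m) :=
  blkrow (fun i : 'I_l => G (rev_ord i)).
Definition Ct_y (p l : nat) (F : 'I_l -> 'M[R]_(p, p)) : 'M[R]_(p, l * p) :=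
  blkrow (fun i : 'I_l => F (rev_ord i)).
Definition Ct (p m l : nat) (G : 'I_l -> 'M[R]_(p, m)) (F : 'I_l -> 'M[R]_(p, p))
  : 'M[R]_(p, l * m + l * p) := row_mx (Ct_u G) (Ct_y F).
Definition At (p m l : nat) (G : 'I_l -> 'M[R]_(p, m)) (F : 'I_l -> 'M[R]_(p, p))
  : 'M[R]_(l * m + l * p) :=
  block_mx (shift_mx l m) 0
           (last_mx l p *m Ct_u G) (shift_mx l p + last_mx l p *m Ct_y F).
Definition Bt (p m l : nat) (D : 'M[R]_(p, m)) : 'M[R]_(l * m + l * p, m) :=
  col_mx (last_mx l m) (last_mx l p *m D).

Definition ext_state (m p l : nat) (u : nat -> 'cV[R]_m) (y : nat -> 'cV[R]_p) (a : nat)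
  : 'cV[R]_(l * m + l * p) := col_mx (seg u a l) (seg y a l).
Definition ext_ss (m p l : nat) (us : 'cV[R]_m) (ys : 'cV[R]_p) : 'cV[R]_(l * m + l * p) :=
  ext_state l (fun _ => us) (fun _ => ys) 0.

Definition qf (d : nat) (P : 'M[R]_d) (x : 'cV[R]_d) : R := (x^T *m P *m x) ord0 ord0.
Definition sqnorm (d : nat) (x : 'cV[R]_d) : R := \sum_(i < d) (x i ord0) ^+ 2.
Definition posdef (d : nat) (P : 'M[R]_d) : Prop :=
  P^T = P /\ forall x : 'cV[R]_d, x != 0 -> 0 < qf P x.

Definition in_interior (d : nat) (S : set 'cV[R]_d) (x : 'cV[R]_d) : Prop :=
  exists2 e : R, 0 < e & forall z : 'cV[R]_d, (forall i, `|z i ord0 - x i ord0| < e) -> S z.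

Definition in_UlYl (m p l : nat) (U : set 'cV[R]_m) (Y : set 'cV[R]_p)
  (xi : 'cV[R]_(l * m + l * p)) : Prop :=
  forall i : 'I_l, U (blk i (usubmx xi)) /\ Y (blk i (dsubmx xi)).

(* Indices are shifted by l: ub k, yb k stand for bar u_(k-l)(t), bar y_(k-l)(t). *)
Section OCP.
Variables (m p l L N : nat) (ud : nat -> 'cV[R]_m) (yd : nat -> 'cV[R]_p)
  (U : set 'cV[R]_m) (Y : set 'cV[R]_p) (us : 'cV[R]_m) (ys : 'cV[R]_p)
  (Qw : 'M[R]_p) (Rw : 'M[R]_m) (P : 'M[R]_(l * m + l * p))
  (Xf : set 'cV[R]_(l * m + l * p)).

Definition ocp_feasible_sol (xi : 'cV[R]_(l * m + l * p))
  (alpha : 'cV[R]_(N - (L + l)).+1) (ub : nat -> 'cV[R]_m) (yb : nat -> 'cV[R]_p) : Prop :=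
  [/\ seg ub 0 (L + l) = hankel (L + l) N ud *m alpha,
      seg yb 0 (L + l) = hankel (L + l) N yd *m alpha,
      ext_state l ub yb 0 = xi,
      Xf (ext_state l ub yb L) &
      forall k, (k < L)%N -> U (ub (l + k)%N) /\ Y (yb (l + k)%N)].

Definition ocp_cost (ub : nat -> 'cV[R]_m) (yb : nat -> 'cV[R]_p) : R :=
  \sum_(k < L) (qf Rw (ub (l + k)%N - us) + qf Qw (yb (l + k)%N - ys))
  + qf P (ext_state l ub yb L - ext_ss l us ys).

Definition ocp_feasible (xi : 'cV[R]_(l * m + l * p)) : Prop :=
  exists alpha ub yb, ocp_feasible_sol xi alpha ub yb.

Definition ocp_optimal_sol (xi : 'cV[R]_(l * m + l * p))
  (alpha : 'cV[R]_(N - (L + l)).+1) (ub : nat -> 'cV[R]_m) (yb : nat -> 'cV[R]_p) : Prop :=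
  ocp_feasible_sol xi alpha ub yb /\
  forall alpha' ub' yb', ocp_feasible_sol xi alpha' ub' yb' -> ocp_cost ub yb <= ocp_cost ub' yb'.

Definition ocp_value (xi : 'cV[R]_(l * m + l * p)) : R :=
  inf [set c | exists alpha ub yb, ocp_feasible_sol xi alpha ub yb /\ c = ocp_cost ub yb].
End OCP.

End Defs.
Arguments ocp_feasible_sol {R m p l} L N.
Arguments ocp_feasible {R m p l} L N.
Arguments ocp_optimal_sol {R m p l} L N.
Arguments ocp_value {R m p l} L N.

(* Main.v *)
Require Import Defs.
From HB Require Import structures.
From mathcomp Require Import all_boot all_order all_algebra.
From mathcomp Require Import boolp classical_sets reals.
From mathcomp Require Import zify ring lra.
Import Order.TTheory GRing.Theory Num.Theory.
Set Implicit Arguments. Unset Strict Implicit. Unset Printing Implicit Defensive.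
Local Open Scope ring_scope.

Section Blk.
Variable R : realType.

Lemma blkcolE k d1 d2 (M : 'I_k -> 'M[R]_(d1,d2)) i j r :
  blkcol M (mxvec_index i j) r = M i j r.
Proof. by rewrite /blkcol /blkrow !mxE mxvecE !mxE. Qed.

Lemma blkrowE k d1 d2 (M : 'I_k -> 'M[R]_(d1,d2)) i j r :
  blkrow M r (mxvec_index i j) = M i r j.
Proof. by rewrite /blkrow !mxE mxvecE !mxE. Qed.

Lemma eq_blkcol k d1 d2 (f g : 'I_k -> 'M[R]_(d1,d2)) :
  (forall i, f i = g i) -> blkcol f = blkcol g.
Proof.
move=> H; apply/matrixP => r c; case/mxvec_indexP: r => i j.
by rewrite !blkcolE H.
Qed.

Lemma blkcol_inj k d1 d2 (f g : 'I_k -> 'M[R]_(d1,d2)) :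
  blkcol f = blkcol g -> forall i, f i = g i.
Proof.
move=> H i; apply/matrixP => j r.
by have := congr1 (fun M : 'M[R]_(k * d1, d2) => M (mxvec_index i j) r) H; rewrite !blkcolE.
Qed.

Lemma sum_mxvec (k d : nat) (F : 'I_(k * d) -> R) :
  \sum_r F r = \sum_(i < k) \sum_(j < d) F (mxvec_index i j).
Proof.
rewrite (reindex _ (curry_mxvec_bij _ _)) /=.
rewrite pair_bigA /=. by apply: eq_bigr => -[i j] _.
Qed.

Lemma blkrow_mul_blkcol k d1 d2 d3 (M : 'I_k -> 'M[R]_(d1,d2)) (v : 'I_k -> 'M[R]_(d2,d3)) :
  blkrow M *m blkcol v = \sum_j M j *m v j.
Proof.
apply/matrixP => r c; rewrite !mxE summxE sum_mxvec.
apply: eq_bigr => i _; rewrite mxE; apply: eq_bigr => j _.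
by rewrite blkrowE blkcolE.
Qed.

Lemma blkcol_mul k d1 d2 d3 (M : 'I_k -> 'M[R]_(d1,d2)) (X : 'M[R]_(d2,d3)) :
  blkcol M *m X = blkcol (fun i => M i *m X).
Proof.
apply/matrixP => r c; case/mxvec_indexP: r => i j.
rewrite blkcolE !mxE; apply: eq_bigr => s _; by rewrite blkcolE.
Qed.

Lemma blkcolD k d1 d2 (f g : 'I_k -> 'M[R]_(d1,d2)) :
  blkcol f + blkcol g = blkcol (fun i => f i + g i).
Proof.
apply/matrixP => r c; case/mxvec_indexP: r => i j.
by rewrite mxE !blkcolE mxE.
Qed.

Lemma blkcolN k d1 d2 (f : 'I_k -> 'M[R]_(d1,d2)) :
  - blkcol f = blkcol (fun i => - f i).
Proof.
apply/matrixP => r c; case/mxvec_indexP: r => i j.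
by rewrite mxE !blkcolE mxE.
Qed.

Lemma blkcol_sum k d1 d2 (I : finType) (f : I -> 'I_k -> 'M[R]_(d1,d2)) :
  \sum_a blkcol (f a) = blkcol (fun i => \sum_a f a i).
Proof.
apply/matrixP => r c; case/mxvec_indexP: r => i j.
rewrite summxE blkcolE summxE; apply: eq_bigr => a _; by rewrite blkcolE.
Qed.

Lemma blkcolZ k d1 d2 (f : 'I_k -> 'M[R]_(d1,d2)) a :
  a *: blkcol f = blkcol (fun i => a *: f i).
Proof.
apply/matrixP => r c; case/mxvec_indexP: r => i j.
by rewrite mxE !blkcolE mxE.
Qed.

Lemma blkmx_mul k d1 d2 d3 (M : 'I_k -> 'I_k -> 'M[R]_(d1,d2)) (v : 'I_k -> 'M[R]_(d2,d3)) :
  blkmx M *m blkcol v = blkcol (fun i => \sum_j M i j *m v j).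
Proof.
rewrite /blkmx blkcol_mul; apply: eq_blkcol => i.
by rewrite blkrow_mul_blkcol.
Qed.

Lemma sqnorm_blkcol k d (v : 'I_k -> 'cV[R]_d) :
  sqnorm (blkcol v) = \sum_i sqnorm (v i).
Proof.
rewrite /sqnorm sum_mxvec; apply: eq_bigr => i _; apply: eq_bigr => j _.
by rewrite blkcolE.
Qed.

Lemma sqnorm_col_mx d1 d2 (a : 'cV[R]_d1) (b : 'cV[R]_d2) :
  sqnorm (col_mx a b) = sqnorm a + sqnorm b.
Proof.
rewrite /sqnorm big_split_ord /=; congr (_ + _); apply: eq_bigr => i _.
  by rewrite col_mxEu.
by rewrite col_mxEd.
Qed.

Lemma sqnorm_ge0 d (v : 'cV[R]_d) : 0 <= sqnorm v.
Proof. by apply: sumr_ge0 => i _; apply: sqr_ge0. Qed.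

End Blk.

Section Seg.
Variable R : realType.

Lemma seg_eq d (x x' : nat -> 'cV[R]_d) a a' k :
  (forall i : 'I_k, x (a + i)%N = x' (a' + i)%N) -> seg x a k = seg x' a' k.
Proof. by move=> H; apply: eq_blkcol. Qed.

Lemma seg_inj d (x x' : nat -> 'cV[R]_d) a a' k :
  seg x a k = seg x' a' k -> forall i, (i < k)%N -> x (a + i)%N = x' (a' + i)%N.
Proof. by move=> H i lik; exact: (blkcol_inj H (Ordinal lik)). Qed.

Definition comb d N' (al : 'cV[R]_N') (x : nat -> 'cV[R]_d) (i : nat) : 'cV[R]_d :=
  \sum_(c < N') al c ord0 *: x (c + i)%N.

Lemma hankel_mul d T N (x : nat -> 'cV[R]_d) (al : 'cV[R]_(N - T).+1) :
  hankel T N x *m al = seg (comb al x) 0 T.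
Proof.
apply/matrixP => r c; case/mxvec_indexP: r => i j.
rewrite /seg blkcolE !mxE /comb summxE; apply: eq_bigr => s _.
rewrite /hankel !mxE mxvecE !mxE mulrC add0n; by rewrite (ord1 c).
Qed.

Lemma ext_state_inj l m p (u u' : nat -> 'cV[R]_m) (y y' : nat -> 'cV[R]_p) a b :
  ext_state l u y a = ext_state l u' y' b ->
  forall i, (i < l)%N -> u (a + i)%N = u' (b + i)%N /\ y (a + i)%N = y' (b + i)%N.
Proof.
move=> /eq_col_mx [H1 H2] i li; split; [exact: seg_inj H1 i li | exact: seg_inj H2 i li].
Qed.

Lemma ext_state_eq l m p (u u' : nat -> 'cV[R]_m) (y y' : nat -> 'cV[R]_p) a b :
  (forall i, (i < l)%N -> u (a + i)%N = u' (b + i)%N /\ y (a + i)%N = y' (b + i)%N) ->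
  ext_state l u y a = ext_state l u' y' b.
Proof.
move=> H; rewrite /ext_state; congr col_mx; apply: seg_eq => i; by case: (H i (ltn_ord i)).
Qed.

Lemma ext_state_sub l m p (u : nat -> 'cV[R]_m) (y : nat -> 'cV[R]_p) us ys a :
  ext_state l u y a - ext_ss l us ys =
  ext_state l (fun k => u k - us) (fun k => y k - ys) a.
Proof.
rewrite /ext_ss /ext_state opp_col_mx add_col_mx /seg !blkcolN !blkcolD //.
Qed.

Lemma sqnorm_ext_state l m p (u : nat -> 'cV[R]_m) (y : nat -> 'cV[R]_p) a :
  sqnorm (ext_state l u y a) = \sum_(i < l) (sqnorm (u (a + i)%N) + sqnorm (y (a + i)%N)).
Proof. by rewrite /ext_state sqnorm_col_mx /seg !sqnorm_blkcol big_split. Qed.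

Lemma shift_seg l d (x : nat -> 'cV[R]_d) a :
  shift_mx R l d *m seg x a l =
  blkcol (fun i : 'I_l => if (i.+1 < l)%N then x (a + i.+1)%N else 0).
Proof.
rewrite /shift_mx /seg blkmx_mul; apply: eq_blkcol => i.
rewrite (eq_bigr (fun j : 'I_l => if (j : nat) == i.+1 then x (a + j)%N else 0)); last first.
  by move=> j _; case: eqP => _; rewrite ?mul1mx ?mul0mx.
by rewrite -big_mkcond (big_ord1_eq _ (fun j => x (a + j)%N)).
Qed.

Lemma last_mul l d d2 (X : 'M[R]_(d, d2)) :
  last_mx R l d *m X = blkcol (fun i : 'I_l => if (i : nat) == l.-1 then X else 0).
Proof.
rewrite /last_mx blkcol_mul; apply: eq_blkcol => i.
by case: eqP; rewrite ?mul1mx ?mul0mx.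
Qed.

Lemma shift_last l d (x : nat -> 'cV[R]_d) a :
  shift_mx R l d *m seg x a l + last_mx R l d *m x (a + l)%N = seg x (a + 1) l.
Proof.
rewrite shift_seg last_mul blkcolD; apply: eq_blkcol => i.
have il := ltn_ord i.
case: ltnP => h.
  have -> : ((i : nat) == l.-1) = false by apply/eqP; lia.
  by rewrite addr0; congr x; lia.
have -> : ((i : nat) == l.-1) = true by apply/eqP; lia.
rewrite add0r; congr x; lia.
Qed.

Lemma Ct_mul l m p (G : 'I_l -> 'M[R]_(p, m)) (F : 'I_l -> 'M[R]_(p, p)) u y a :
  Ct G F *m ext_state l u y a =
  \sum_(i < l) G i *m u (a + l - i.+1)%N + \sum_(i < l) F i *m y (a + l - i.+1)%N.
Proof.
rewrite /Ct /ext_state mul_row_col /Ct_u /Ct_y /seg !blkrow_mul_blkcol.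
congr (_ + _); rewrite (reindex_inj rev_ord_inj) /=; apply: eq_bigr => i _;
  rewrite rev_ordK /= addnBA //.
Qed.

Lemma At_mul l m p (G : 'I_l -> 'M[R]_(p, m)) (F : 'I_l -> 'M[R]_(p, p)) D u y a :
  y (a + l)%N = Ct G F *m ext_state l u y a + D *m u (a + l)%N ->
  At G F *m ext_state l u y a + Bt l D *m u (a + l)%N = ext_state l u y (a + 1).
Proof.
move=> Hy.
rewrite /At /Bt /ext_state mul_block_col mul_col_mx add_col_mx mul0mx addr0 shift_last.
congr col_mx.
rewrite -shift_last Hy /Ct mul_row_col.
rewrite !mulmxDr !mulmxDl !mulmxA; rewrite /ext_state.
by rewrite -!addrA addrCA.
Qed.

End Seg.

Section PD.
Variable R : realType.

Definition Qf d (P : 'I_d -> 'I_d -> R) (x : 'I_d -> R) := \sum_i \sum_j x i * P i j * x j.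
Definition nrm d (x : 'I_d -> R) := \sum_i x i ^+ 2.

Lemma CS d (h x : 'I_d -> R) : (\sum_i h i * x i) ^+ 2 <= nrm h * nrm x.
Proof.
rewrite /nrm expr2 mulr_suml.
have E1 : (\sum_i h i ^+ 2) * (\sum_j x j ^+ 2) = \sum_i \sum_j (h i ^+ 2 * x j ^+ 2).
  by rewrite mulr_suml; apply: eq_bigr => i _; rewrite mulr_sumr.
have E2 : (\sum_i h i ^+ 2) * (\sum_j x j ^+ 2) = \sum_i \sum_j (h j ^+ 2 * x i ^+ 2).
  by rewrite E1 exchange_big.
have E : (\sum_i h i ^+ 2) * (\sum_j x j ^+ 2) =
  \sum_i \sum_j ((h i ^+ 2 * x j ^+ 2 + h j ^+ 2 * x i ^+ 2) / 2).
  transitivity ((\sum_i \sum_j (h i ^+ 2 * x j ^+ 2) + \sum_i \sum_j (h j ^+ 2 * x i ^+ 2)) / 2).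
    by rewrite -E1 -E2; field.
  rewrite -big_split /= mulr_suml; apply: eq_bigr => i _; rewrite -big_split mulr_suml //.
rewrite E; apply: ler_sum => i _; rewrite mulr_sumr; apply: ler_sum => j _.
clear E E1 E2; have := sqr_ge0 (h i * x j - h j * x i); nra.
Qed.

Definition ext d (x0 : R) (x' : 'I_d -> R) (i : 'I_d.+1) : R :=
  match unlift ord0 i with Some j => x' j | None => x0 end.

Lemma Qf_recl d (P : 'I_d.+1 -> 'I_d.+1 -> R) (x : 'I_d.+1 -> R) :
  Qf P x = x ord0 * P ord0 ord0 * x ord0
    + 2 * x ord0 * (\sum_j (P ord0 (lift ord0 j) + P (lift ord0 j) ord0) / 2 * x (lift ord0 j))
    + Qf (fun i j => P (lift ord0 i) (lift ord0 j)) (fun j => x (lift ord0 j)).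
Proof.
rewrite /Qf big_ord_recl big_ord_recl /=.
under [X in _ + X = _]eq_bigr => i _ do rewrite big_ord_recl.
rewrite big_split /= addrA; congr (_ + _).
rewrite -addrA; congr (_ + _).
rewrite mulr_sumr -big_split /=; apply: eq_bigr => i _; by field.
Qed.

Lemma Qf_ext d (P : 'I_d.+1 -> 'I_d.+1 -> R) x0 x' :
  Qf P (ext x0 x') = x0 * P ord0 ord0 * x0
    + 2 * x0 * (\sum_j (P ord0 (lift ord0 j) + P (lift ord0 j) ord0) / 2 * x' j)
    + Qf (fun i j => P (lift ord0 i) (lift ord0 j)) x'.
Proof.
rewrite Qf_recl /ext unlift_none; congr (_ + _ + _).
  by congr (_ * _); apply: eq_bigr => j _; rewrite liftK.
by rewrite /Qf; apply: eq_bigr => i _; apply: eq_bigr => j _; rewrite !liftK.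
Qed.

Lemma Qf_lb d (P : 'I_d -> 'I_d -> R) :
  (forall x : 'I_d -> R, (exists i, x i != 0) -> 0 < Qf P x) ->
  exists2 lam, 0 < lam & forall x, lam * nrm x <= Qf P x.
Proof.
elim: d P => [|d IH] P HP.
  by exists 1 => // x; rewrite /nrm /Qf !big_ord0 mulr0.
set a := P ord0 ord0.
set h := fun j => (P ord0 (lift ord0 j) + P (lift ord0 j) ord0) / 2.
set P' := fun i j => P (lift ord0 i) (lift ord0 j).
have Ha : 0 < a.
  have e1 : exists i, ext 1 (fun _ : 'I_d => 0) i != 0.
    by exists ord0; rewrite /ext unlift_none oner_neq0.
  have := HP _ e1; rewrite Qf_ext /Qf.
  rewrite big1; last by move=> j _; rewrite mulr0.
  rewrite big1; last by move=> i _; rewrite big1 // => j _; rewrite mulr0.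
  by rewrite !mulr0 !addr0 mulr1 mul1r.
set S := fun i j => P' i j - h i * h j / a.
have QS : forall x', Qf S x' = Qf P' x' - (\sum_j h j * x' j) ^+ 2 / a.
  move=> x'; rewrite /Qf expr2 mulr_suml mulr_suml -sumrB; apply: eq_bigr => i _.
  rewrite mulr_sumr mulr_suml -sumrB; apply: eq_bigr => j _.
  rewrite /S; field; exact: lt0r_neq0.
have QP : forall x0 x', Qf P (ext x0 x') =
    a * (x0 + (\sum_j h j * x' j) / a) ^+ 2 + Qf S x'.
  move=> x0 x'; rewrite Qf_ext QS -/a -/P'.
  rewrite (_ : \sum_j _ = \sum_j h j * x' j) //.
  set b := \sum_j h j * x' j; field; exact: lt0r_neq0.
have [mu mu0 Hmu] : exists2 mu, 0 < mu & forall x', mu * nrm x' <= Qf S x'.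
  apply: IH => x' [i xi].
  have := HP (ext (- (\sum_j h j * x' j) / a) x') (ex_intro _ (lift ord0 i) _).
  rewrite /ext liftK => /(_ xi).
  rewrite -/(ext _ x') QP mulNr addNr expr0n /= mulr0 add0r //.
pose H := nrm h.
pose c := Num.max (2 / a) ((1 + 2 * H / a ^+ 2) / mu).
have c0 : 0 < c by rewrite lt_max; apply/orP; left; apply: divr_gt0.
exists (c^-1); first by rewrite invr_gt0.
move=> x.
have -> : x = ext (x ord0) (fun j => x (lift ord0 j)).
  apply: funext => i; rewrite /ext; case: unliftP => [j ->| ->] //.
set x' := fun j => x (lift ord0 j); set x0 := x ord0.
rewrite QP.
have -> : nrm (ext x0 x') = x0 ^+ 2 + nrm x'.
  by rewrite /nrm big_ord_recl /ext unlift_none; congr (_ + _); apply: eq_bigr => j _; rewrite liftK.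
set b := \sum_j h j * x' j.
set z := x0 + b / a.
have Hb : b ^+ 2 <= H * nrm x' by apply: CS.
have HS := Hmu x'.
have Hn : 0 <= nrm x' by apply: sumr_ge0 => i _; apply: sqr_ge0.
have H0 : 0 <= H by apply: sumr_ge0 => i _; apply: sqr_ge0.
rewrite ler_pdivrMl // .
have e1 : x0 = z - b / a by rewrite /z addrK.
have c1 : 2 / a <= c by rewrite le_max lexx.
have c2 : (1 + 2 * H / a ^+ 2) / mu <= c by rewrite le_max lexx orbT.
have Hx0 : x0 ^+ 2 <= 2 * z ^+ 2 + 2 * (b / a) ^+ 2.
  have G2 : forall u v : R, (u - v) ^+ 2 <= 2 * u ^+ 2 + 2 * v ^+ 2.
    by move=> u v; have := sqr_ge0 (u + v); nra.
  by rewrite {1}e1; apply: G2.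
have Hba : (b / a) ^+ 2 <= H / a ^+ 2 * nrm x'.
  rewrite expr_div_n [H / _ * _]mulrAC ler_wpM2r // invr_ge0 exprn_ge0 //; exact: ltW.
have T1 : 2 * z ^+ 2 <= c * (a * z ^+ 2).
  have : 2 * z ^+ 2 = (2 / a) * (a * z ^+ 2) by field; exact: lt0r_neq0.
  move=> ->; apply: ler_wpM2r => //; apply: mulr_ge0; [exact: ltW | exact: sqr_ge0].
have T2 : (1 + 2 * H / a ^+ 2) * nrm x' <= c * Qf S x'.
  have : (1 + 2 * H / a ^+ 2) * nrm x' = ((1 + 2 * H / a ^+ 2) / mu) * (mu * nrm x').
    by field; rewrite !lt0r_neq0.
  move=> ->; apply: (le_trans (ler_wpM2l _ HS)).
    apply: divr_ge0; last exact: ltW.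
    by apply: addr_ge0 => //; apply: mulr_ge0; [apply: mulr_ge0 | rewrite invr_ge0 sqr_ge0].
  apply: ler_wpM2r => //; apply: (le_trans _ HS); apply: mulr_ge0 => //; exact: ltW.
have Hq : 2 * H / a ^+ 2 * nrm x' = 2 * (H / a ^+ 2 * nrm x') by rewrite !mulrA.
nra.
Qed.

End PD.

Section PD2.
Variable R : realType.

Lemma qf_sum d (P : 'M[R]_d) x : qf P x = \sum_i \sum_j x i ord0 * P i j * x j ord0.
Proof.
rewrite /qf !mxE exchange_big /=; apply: eq_bigr => i _.
rewrite !mxE mulr_suml; apply: eq_bigr => j _; by rewrite !mxE.
Qed.

Lemma pd_lb d (P : 'M[R]_d) : posdef P ->
  exists2 lam, 0 < lam & forall x, lam * sqnorm x <= qf P x.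
Proof.
move=> [_ HP].
have [lam l0 Hl] : exists2 lam, 0 < lam & forall x, lam * nrm x <= Qf (fun i j => P i j) x.
  apply: Qf_lb => x [i xi].
  have nz : (\col_k x k : 'cV[R]_d) != 0.
    by apply/eqP => /matrixP /(_ i ord0); rewrite !mxE; apply/eqP.
  have := HP _ nz; rewrite qf_sum /Qf.
  by under eq_bigr => a _ do under eq_bigr => b _ do rewrite !mxE.
exists lam => // x; have := Hl (fun i => x i ord0).
by rewrite qf_sum /Qf /nrm /sqnorm.
Qed.

Lemma qf0 d (P : 'M[R]_d) : qf P 0 = 0.
Proof. by rewrite /qf mulmx0 mxE. Qed.

Lemma qf_ge0 d (P : 'M[R]_d) x : posdef P -> 0 <= qf P x.
Proof.
move=> [_ HP]; case: (eqVneq x 0) => [->|nz]; first by rewrite qf0.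
exact: ltW (HP _ nz).
Qed.

Lemma qf_le0 d (P : 'M[R]_d) x : posdef P -> qf P x <= 0 -> x = 0.
Proof.
move=> [_ HP] H; case: (eqVneq x 0) => // nz.
by have := HP _ nz; rewrite ltNge H.
Qed.

Lemma qf_KRK d e (K : 'M[R]_(e, d)) (Rw : 'M[R]_e) v :
  qf (K^T *m Rw *m K) v = qf Rw (K *m v).
Proof. by rewrite /qf trmx_mul !mulmxA. Qed.

End PD2.

Lemma CH_sum (R : comNzRingType) n (A : 'M[R]_n) :
  \sum_(k < n.+1) (char_poly A)`_k *: A ^+ k = 0.
Proof.
case: n A => [|n] A; first by apply/matrixP => -[].
rewrite -[X in _ = X](Cayley_Hamilton A).
rewrite -[in RHS](coefK (char_poly A)) size_char_poly poly_def rmorph_sum /=.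
apply: eq_bigr => k _; by rewrite horner_mxZ rmorphXn /= horner_mx_X.
Qed.

Lemma CH_lead (R : comNzRingType) n (A : 'M[R]_n) : (char_poly A)`_n = 1.
Proof.
have := char_poly_monic A; rewrite monicE lead_coefE size_char_poly /=. by move/eqP.
Qed.

Section FL.
Variable R : realType.
Variables (n m p : nat) (A : 'M[R]_n) (B : 'M[R]_(n, m)) (C : 'M[R]_(p, n)) (D : 'M[R]_(p, m)).

Lemma mxexprS k : A *m A ^+ k = A ^+ k.+1.
Proof. by rewrite exprS mulmxE. Qed.

Lemma comb_lin d1 d2 d3 N' (al : 'cV[R]_N') (h : nat -> 'cV[R]_d3) (f : nat -> 'cV[R]_d1)
  (g : nat -> 'cV[R]_d2) (M1 : 'M[R]_(d3,d1)) (M2 : 'M[R]_(d3,d2)) i :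
  (forall c : 'I_N', h (c + i)%N = M1 *m f (c + i)%N + M2 *m g (c + i)%N) ->
  comb al h i = M1 *m comb al f i + M2 *m comb al g i.
Proof.
move=> H; rewrite /comb !mulmx_sumr -big_split /=; apply: eq_bigr => c _.
by rewrite H scalerDr !scalemxAr.
Qed.

Lemma comb_traj N T (ud : nat -> 'cV[R]_m) (yd : nat -> 'cV[R]_p) (xd : nat -> 'cV[R]_n)
  (al : 'cV[R]_(N - T).+1) :
  (T <= N)%N ->
  (forall k, (k < N)%N -> yd k = C *m xd k + D *m ud k) ->
  (forall k, (k.+1 < N)%N -> xd k.+1 = A *m xd k + B *m ud k) ->
  (forall i, (i.+1 < T)%N -> comb al xd i.+1 = A *m comb al xd i + B *m comb al ud i) /\
  (forall i, (i < T)%N -> comb al yd i = C *m comb al xd i + D *m comb al ud i).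
Proof.
move=> TN Hy Hx; split => i iT.
  have -> : comb al xd i.+1 = comb al (fun k => xd k.+1) i.
    by rewrite /comb; apply: eq_bigr => c _; rewrite addnS.
  apply: comb_lin => c; apply: Hx; have := ltn_ord c; lia.
apply: comb_lin => c; apply: Hy; have := ltn_ord c; lia.
Qed.

Lemma state_exp (x : nat -> 'cV[R]_n) (u : nat -> 'cV[R]_m) a k :
  (forall j, (a <= j)%N -> (j < a + k)%N -> x j.+1 = A *m x j + B *m u j) ->
  x (a + k)%N = A ^+ k *m x a + \sum_(i < k) A ^+ (k.-1 - i) *m B *m u (a + i)%N.
Proof.
elim: k => [|k IH] H; first by rewrite addn0 expr0 mul1mx big_ord0 addr0.
rewrite addnS H; last 2 first.
- exact: leq_addr.
- by rewrite ltn_add2l.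
rewrite IH => [|j j1 j2]; last by apply: H => //; lia.
rewrite big_ord_recr /= subnn expr0 mul1mx mulmxDr mulmxA mxexprS addrA.
congr (_ + _ + _); rewrite mulmx_sumr; apply: eq_bigr => i _.
rewrite !mulmxA mxexprS; congr (_ *m _ *m _); congr (_ ^+ _); have := ltn_ord i; lia.
Qed.

Lemma pe_kernel N K (ud : nat -> 'cV[R]_m) (V : nat -> 'rV[R]_m) :
  pers_exc N K ud ->
  (forall c : 'I_(N - K).+1, \sum_(i < K) V i *m ud (c + i)%N = 0) ->
  forall i, (i < K)%N -> V i = 0.
Proof.
move=> [KN Hr] H.
set Vb := blkrow (fun i : 'I_K => V i).
have HV : Vb *m hankel K N ud = 0.
  apply/matrixP => r c; rewrite (ord1 r) !mxE sum_mxvec.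
  transitivity ((\sum_(i < K) V i *m ud (c + i)%N) ord0 ord0); last by rewrite H mxE.
  rewrite summxE; apply: eq_bigr => i _; rewrite !mxE; apply: eq_bigr => j _.
  by rewrite blkrowE !mxE mxvecE !mxE.
have rf : row_free (hankel K N ud) by rewrite /row_free Hr mulnC.
have V0 : Vb = 0 by apply: (row_free_inj rf); rewrite HV mul0mx.
move=> i iK; apply/matrixP => a j; rewrite (ord1 a).
have := congr1 (fun M : 'rV[R]_(K * m) => M ord0 (mxvec_index (Ordinal iK) j)) V0.
by rewrite blkrowE !mxE.
Qed.

Lemma FL T N (ud : nat -> 'cV[R]_m) (yd : nat -> 'cV[R]_p) :
  (0 < T)%N -> controllable A B -> is_traj A B C D N ud yd -> pers_exc N (T + n) ud ->
  forall (u : nat -> 'cV[R]_m) (y : nat -> 'cV[R]_p) (x : nat -> 'cV[R]_n),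
  (forall j, (j.+1 < T)%N -> x j.+1 = A *m x j + B *m u j) ->
  (forall j, (j < T)%N -> y j = C *m x j + D *m u j) ->
  exists al : 'cV[R]_(N - T).+1,
    forall i, (i < T)%N -> u i = comb al ud i /\ y i = comb al yd i.
Proof.
move=> T0 Hc [xd [Hyd Hxd]] Hpe u y x Hx Hy.
have TN : (T + n <= N)%N by case: Hpe.
set Xd := \matrix_(r < n, c < (N - T).+1) xd c r ord0.
set M := col_mx Xd (hankel T N ud).
have Xd_mul : forall al, Xd *m al = comb al xd 0.
  move=> al; apply/matrixP => r k; rewrite !mxE summxE; apply: eq_bigr => c _.
  by rewrite !mxE addn0 (ord1 k) mulrC.
have free : row_free M.
  apply: inj_row_free => v Hv.
  set xi := lsubmx v; set et := rsubmx v.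
  pose eta (i : nat) : 'rV[R]_m :=
    if insub i is Some o then \row_j et ord0 (mxvec_index (o : 'I_T) j) else 0.
  have eta_ord : forall o : 'I_T, eta o = \row_j et ord0 (mxvec_index o j).
    move=> o; rewrite /eta; case: insubP => [o' _ /val_inj -> //|]; by rewrite ltn_ord.
  have eta_big : forall i, (T <= i)%N -> eta i = 0.
    move=> i iT; rewrite /eta; case: insubP => [o' | //]; by rewrite ltnNge iT.
  have col_id : forall c : 'I_(N - T).+1,
      xi *m xd c + \sum_(i < T) eta i *m ud (c + i)%N = 0.
    move=> c; apply/matrixP => a b; rewrite (ord1 a) (ord1 b).
    have E := congr1 (fun M : 'rV[R]_(N - T).+1 => M ord0 c) Hv.
    rewrite /= -(hsubmxK v) mul_row_col -/xi -/et !mxE in E.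
    rewrite [RHS]mxE; apply: etrans E; rewrite !mxE.
    rewrite summxE; congr (_ + _).
      by apply: eq_bigr => r _; rewrite !mxE.
    rewrite sum_mxvec; apply: eq_bigr => i _; rewrite eta_ord !mxE; apply: eq_bigr => j _.
    by rewrite !mxE mxvecE !mxE.
  pose w (k i : nat) : 'rV[R]_m :=
    if (i < k)%N then xi *m A ^+ (k.-1 - i) *m B else eta (i - k)%N.
  have S1a : forall k, (k <= n)%N -> forall c, (c + k <= N - T)%N ->
      xi *m A ^+ k *m xd c + \sum_(i < T + n) w k i *m ud (c + i)%N = 0.
    move=> k kn c ck.
    have ci := col_id (Ordinal (ck : (c + k < (N - T).+1)%N)); rewrite /= in ci.
    rewrite (state_exp (x := xd) (u := ud)) in ci; last first.
      move=> j j1 j2; apply: Hxd; lia.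
    apply: etrans ci; rewrite mulmxDr mulmxA -addrA; congr (_ + _).
    rewrite -(big_mkord xpredT (fun i => w k i *m ud (c + i)%N)).
    rewrite (big_cat_nat (leq0n k)) /=; last lia.
    rewrite big_mkord mulmx_sumr; congr (_ + _).
      apply: eq_bigr => i _; rewrite /w ltn_ord !mulmxA //.
    rewrite -{1}(add0n k) big_addn (big_cat_nat (leq0n T)) /=; last lia.
    rewrite big_mkord [X in _ + X]big1_seq ?addr0 => [|i]; last first.
      move=> /andP [_]; rewrite mem_index_iota => /andP [i1 i2].
      by rewrite /w ltnNge leq_addl /= addnK eta_big // mul0mx.
    apply: eq_bigr => i _; rewrite /w ltnNge leq_addl /= addnK; congr (_ *m ud _); lia.
  set cp := char_poly A.
  pose W (i : nat) := \sum_(k < n.+1) cp`_k *: w k i.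
  have W0 : forall i, (i < T + n)%N -> W i = 0.
    apply: (pe_kernel Hpe) => c.
    have E : \sum_(k < n.+1) cp`_k *: (xi *m A ^+ k *m xd c
               + \sum_(i < T + n) w k i *m ud (c + i)%N) = 0.
      apply: big1 => k _; rewrite S1a ?scaler0 //; first by have := ltn_ord k; lia.
      have := ltn_ord c; have := ltn_ord k; lia.
    apply: etrans E; under [RHS]eq_bigr => k _ do rewrite scalerDr.
    rewrite big_split /=.
    have -> : \sum_(k < n.+1) cp`_k *: (xi *m A ^+ k *m xd c) = 0.
      under eq_bigr => k _ do rewrite scalemxAl scalemxAr.
      by rewrite -mulmx_suml -mulmx_sumr CH_sum mulmx0 mul0mx.
    rewrite add0r; under [RHS]eq_bigr => k _ do rewrite scaler_sumr.
    rewrite exchange_big /=; apply: eq_bigr => i _.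
    by rewrite /W mulmx_suml; apply: eq_bigr => k _; rewrite scalemxAl.
  have cpn : cp`_n = 1 by apply: CH_lead.
  have eta0 : forall s, eta s = 0.
    have : forall d s, (T <= s + d)%N -> eta s = 0.
      elim => [|d IH] s; first by rewrite addn0; apply: eta_big.
      case: (leqP T (s + d)) => [h _|h h2]; first exact: IH.
      have hW : W (n + s)%N = 0 by apply: W0; lia.
      move: hW; rewrite /W big_ord_recr /= cpn scale1r.
      rewrite /w ltnNge leq_addr /= addKn.
      rewrite big1 ?add0r => [-> //|k _].
      rewrite ltnNge (leq_trans (ltnW (ltn_ord k))) ?leq_addr //=.
      by rewrite IH ?scaler0 //; have := ltn_ord k; lia.
    by move=> H s; apply: (H T s); rewrite leq_addl.
  have xiAB : forall j, (j < n)%N -> xi *m A ^+ j *m B = 0.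
    elim/ltn_ind => j IH jn.
    have hW : W (n.-1 - j)%N = 0 by apply: W0; lia.
    move: hW; rewrite /W big_ord_recr /= cpn scale1r.
    have -> : w n (n.-1 - j)%N = xi *m A ^+ j *m B.
      rewrite /w ifT; last lia.
      by congr (_ *m _ ^+ _ *m _); lia.
    rewrite big1 ?add0r => [-> //|k _].
    rewrite /w; case: ifP => h; last by rewrite eta0 scaler0.
    rewrite IH ?scaler0 //; have := ltn_ord k; lia.
  have xi0 : xi = 0.
    have rf : row_free (blkrow (fun i : 'I_n => A ^+ i *m B)) by rewrite /row_free Hc.
    apply: (row_free_inj rf); rewrite mul0mx.
    apply/matrixP => a r; rewrite (ord1 a); case/mxvec_indexP: r => i j.
    rewrite mxE [RHS]mxE.
    have := congr1 (fun M : 'rV[R]_m => M ord0 j) (xiAB i (ltn_ord i)).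
    rewrite -mulmxA !mxE; apply: etrans; apply: eq_bigr => r _; by rewrite blkrowE.
  have et0 : et = 0.
    apply/matrixP => a r; rewrite (ord1 a); case/mxvec_indexP: r => i j.
    have := congr1 (fun M : 'rV[R]_m => M ord0 j) (eta0 i).
    by rewrite eta_ord !mxE.
  by rewrite -(hsubmxK v) -/xi -/et xi0 et0 row_mx0.
have [Binv HB] := row_freeP free.
pose al := Binv *m col_mx (x 0%N) (seg u 0 T).
have Mal : M *m al = col_mx (x 0%N) (seg u 0 T) by rewrite /al mulmxA HB mul1mx.
rewrite /M mul_col_mx in Mal; have [H1 H2] := eq_col_mx Mal.
rewrite hankel_mul Xd_mul in H1 H2.
have Hu : forall i, (i < T)%N -> u i = comb al ud i.
  by move=> i iT; have := seg_inj H2 iT; rewrite !add0n.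
have [Cx Cy] := comb_traj al (leq_trans (leq_addr _ _) TN) Hyd Hxd.
have Hxx : forall i, (i < T)%N -> comb al xd i = x i.
  elim => [|i IH] iT; first by rewrite H1.
  rewrite Cx // IH ?Hx -?Hu //; exact: ltnW.
exists al => i iT; split; first exact: Hu.
by rewrite Cy // Hxx // -Hu // Hy.
Qed.

End FL.

Section Stab.
Variable R : realType.

Lemma bernoulli (x : R) k : 0 <= x <= 1 -> 1 - k%:R * x <= (1 - x) ^+ k.
Proof.
move=> /andP [x0 x1]; elim: k => [|k IH]; first by rewrite mul0r subr0 expr0.
rewrite exprSr -natr1.
have h : 0 <= 1 - x by lra.
have := ler_wpM2r h IH.
have : 0 <= k%:R * x * x by apply: mulr_ge0 => //; apply: mulr_ge0.
nra.
Qed.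

Lemma sum_split (f : nat -> R) a b :
  \sum_(i < a + b) f i = \sum_(i < a) f i + \sum_(i < b) f (a + i)%N.
Proof. by rewrite big_split_ord. Qed.

Lemma sum_window (e : nat -> R) l t : (forall j, 0 <= e j) -> (t <= l)%N ->
  \sum_(i < l) e (t + i)%N <= \sum_(i < l) e i + \sum_(i < l) e (l + i)%N.
Proof.
move=> e0 tl.
rewrite -sum_split.
have -> : (l + l = (t + l) + (l - t))%N by lia.
rewrite sum_split sum_split.
have s1 : 0 <= \sum_(i < t) e i by apply: sumr_ge0.
have s2 : 0 <= \sum_(i < l - t) e (t + l + i)%N by apply: sumr_ge0.
lra.
Qed.

Lemma stab (lam cu : R) (l : nat) : (0 < l)%N -> 0 < lam -> 0 < cu ->
  exists c gamma : R, [/\ 0 < c, 0 < gamma, gamma < 1 &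
   forall V e : nat -> R,
     (forall j, 0 <= e j) -> (forall t, 0 <= V t) ->
     (forall t, V t.+1 <= V t - lam * e (l + t)%N) ->
     (forall t, V t <= cu * \sum_(i < l) e (t + i)%N) ->
     forall t, \sum_(i < l) e (t + i)%N <= c * gamma ^+ t * \sum_(i < l) e i].
Proof.
move=> lpos l0 c0.
set rho := cu / (cu + lam).
have rho0 : 0 < rho by apply: divr_gt0 => //; lra.
have rho1 : rho < 1 by rewrite /rho ltr_pdivrMr; lra.
set gamma := 1 - (1 - rho) / l.+1%:R.
have lp : 0 < l.+1%:R :> R by rewrite ltr0n.
have g0 : 0 < gamma.
  rewrite /gamma subr_gt0 ltr_pdivrMr // mul1r.
  have : 1 <= l.+1%:R :> R by rewrite ler1n.
  lra.
have g1 : gamma < 1.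
  rewrite /gamma ltrBlDr ltrDl; apply: divr_gt0 => //; lra.
have gl : rho <= gamma ^+ l.
  apply: le_trans (bernoulli l _); last first.
    apply/andP; split; first by apply: divr_ge0; lra.
    rewrite ler_pdivrMr // mul1r; have : 1 <= l.+1%:R :> R by rewrite ler1n. lra.
  rewrite mulrA [_ * (1 - rho)]mulrC -mulrA.
  have : l%:R / l.+1%:R <= 1 :> R by rewrite ler_pdivrMr // mul1r ler_nat.
  have : 0 <= l%:R / l.+1%:R :> R by apply: divr_ge0.
  set q := l%:R / l.+1%:R; nra.
have gl0 : 0 < gamma ^+ l by apply: exprn_gt0.
set c := (1 + cu / lam) / gamma ^+ (l + l).
have gll0 : 0 < gamma ^+ (l + l) by apply: exprn_gt0.
have cl0 : 0 < cu / lam by apply: divr_gt0.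
exists c, gamma; split => //; first by apply: divr_gt0 => //; lra.
move=> V e e0 V0 Vdec Vub.
set S := fun t => \sum_(i < l) e (t + i)%N.
have S0 : forall t, 0 <= S t by move=> t; apply: sumr_ge0.
have tele : forall t k, lam * \sum_(i < k) e (l + t + i)%N <= V t - V (t + k)%N.
  move=> t; elim => [|k IH]; first by rewrite big_ord0 mulr0 addn0 subrr.
  rewrite big_ord_recr /= mulrDr addnS.
  have := Vdec (t + k)%N; rewrite addnA; lra.
have mono : forall t k, V (t + k)%N <= V t.
  move=> t k; have := tele t k.
  have : 0 <= lam * \sum_(i < k) e (l + t + i)%N by apply: mulr_ge0; [lra | apply: sumr_ge0].
  lra.
have Sl : forall t, lam * S (t + l)%N <= V t - V (t + l)%N.
  move=> t; rewrite /S; under eq_bigr => i _ do rewrite (addnC t l).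
  exact: tele.
have contr : forall t, V (t + l)%N <= rho * V t.
  move=> t; have h1 := Sl t; have h2 := Vub (t + l)%N; rewrite -/(S _) in h2.
  have : cu * (lam * S (t + l)%N) <= cu * (V t - V (t + l)%N) by apply: ler_wpM2l; lra.
  have : lam * V (t + l)%N <= lam * (cu * S (t + l)%N) by apply: ler_wpM2l; lra.
  move=> k1 k2.
  have -> : rho * V t = (cu * V t) / (cu + lam) by rewrite /rho mulrAC.
  rewrite ler_pdivlMr; last lra.
  nra.
have Vbound : forall t, V t <= gamma ^+ t / gamma ^+ l * V 0%N.
  elim/ltn_ind => t IH.
  case: (ltnP t l) => h.
    have := mono 0%N t; rewrite add0n => h1.
    apply: (le_trans h1); rewrite -[X in X <= _]mul1r; apply: ler_wpM2r => //.
    rewrite ler_pdivlMr // mul1r; apply: (ler_wiXn2l (ltW g0) (ltW g1)); exact: ltnW h.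
  have -> : t = (t - l + l)%N by rewrite subnK.
  apply: (le_trans (contr _)).
  have tlt : (t - l < t)%N by rewrite ltn_subrL lpos (leq_trans lpos h).
  have := IH (t - l)%N tlt.
  rewrite exprD; move=> H.
  have : rho * V (t - l)%N <= gamma ^+ l * V (t - l)%N by apply: ler_wpM2r.
  have : gamma ^+ l * V (t - l)%N <= gamma ^+ l * (gamma ^+ (t - l) / gamma ^+ l * V 0%N)
    by apply: ler_wpM2l => //; exact: ltW.
  have -> : gamma ^+ l * (gamma ^+ (t - l) / gamma ^+ l * V 0%N) =
            gamma ^+ (t - l) * gamma ^+ l / gamma ^+ l * V 0%N by field; exact: lt0r_neq0.
  lra.
move=> t; rewrite -/(S t) -/(S 0%N).
have V0u := Vub 0%N; rewrite -/(S 0%N) in V0u.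
case: (ltnP t l) => h.
  have w := sum_window e0 (ltnW h); rewrite -/(S t) in w.
  have h1 := tele 0%N l; rewrite addn0 add0n in h1.
  have h2 : lam * \sum_(i < l) e (l + i)%N <= V 0%N by have := V0 l; lra.
  have h3 : \sum_(i < l) e (l + i)%N <= cu / lam * S 0%N.
    by rewrite mulrAC ler_pdivlMr // mulrC; exact: le_trans h2 V0u.
  have h4 : 1 <= gamma ^+ t / gamma ^+ (l + l).
    rewrite ler_pdivlMr // mul1r; apply: (ler_wiXn2l (ltW g0) (ltW g1)).
    exact: leq_trans (ltnW h) (leq_addr _ _).
  have h5 : (1 + cu / lam) * S 0%N <= c * gamma ^+ t * S 0%N.
    have -> : c * gamma ^+ t * S 0%N = ((1 + cu / lam) * S 0%N) * (gamma ^+ t / gamma ^+ (l + l)).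
      by rewrite /c; field; rewrite !lt0r_neq0.
    rewrite -[X in X <= _]mulr1; apply: ler_wpM2l => //.
    by apply: mulr_ge0 => //; apply: addr_ge0 => //; exact: ltW.
  apply: le_trans w _; apply: le_trans _ h5; rewrite mulrDl mul1r lerD2l; exact: h3.
have -> : t = (t - l + l)%N by rewrite subnK.
set t' := (t - l)%N.
have h1 := Sl t'.
have h2 := Vbound t'.
have h3 : lam * S (t' + l)%N <= gamma ^+ t' / gamma ^+ l * (cu * S 0%N).
  apply: (le_trans h1); have := V0 (t' + l)%N.
  have : gamma ^+ t' / gamma ^+ l * V 0%N <= gamma ^+ t' / gamma ^+ l * (cu * S 0%N).
    apply: ler_wpM2l => //; apply: divr_ge0; [apply: exprn_ge0; lra | exact: ltW].
  lra.
set g := gamma ^+ t' / gamma ^+ l.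
have g0' : 0 <= g by apply: divr_ge0; [apply: exprn_ge0; exact: ltW | exact: ltW].
have E : c * gamma ^+ (t' + l) * S 0%N = (1 + cu / lam) * (g * S 0%N).
  by rewrite /c /g exprD addnC exprD; field; rewrite !lt0r_neq0 ?exprn_gt0.
have h4 : S (t' + l)%N <= cu / lam * (g * S 0%N).
  rewrite -(ler_pM2l l0) (_ : lam * (cu / lam * (g * S 0%N)) = g * (cu * S 0%N)); first exact: h3.
  by field; exact: lt0r_neq0.
rewrite E; apply: (le_trans h4); rewrite mulrDl mul1r lerDr.
by apply: mulr_ge0 => //; exact: S0.
Qed.

End Stab.

Lemma sum_first (R : realType) (L : nat) (f : nat -> R) : (0 < L)%N ->
  \sum_(k < L) f k = f 0%N + \sum_(k < L.-1) f k.+1.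
Proof. by case: L => // L _; rewrite big_ord_recl. Qed.

Lemma sum_last (R : realType) (L : nat) (f : nat -> R) : (0 < L)%N ->
  \sum_(k < L) f k = \sum_(k < L.-1) f k + f L.-1.
Proof. by case: L => // L _; rewrite big_ord_recr. Qed.

Section Main.
Variables (R : realType) (n m p : nat)
  (A : 'M[R]_n) (B : 'M[R]_(n, m)) (C : 'M[R]_(p, n)) (D : 'M[R]_(p, m))
  (l : nat) (G : 'I_l -> 'M[R]_(p, m)) (F : 'I_l -> 'M[R]_(p, p))
  (N : nat) (ud : nat -> 'cV[R]_m) (yd : nat -> 'cV[R]_p)
  (U : set 'cV[R]_m) (Y : set 'cV[R]_p) (us : 'cV[R]_m) (ys : 'cV[R]_p)
  (Qw : 'M[R]_p) (Rw : 'M[R]_m) (L : nat)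
  (P : 'M[R]_(l * m + l * p)) (K : 'M[R]_(m, l * m + l * p)) (Xf : set 'cV[R]_(l * m + l * p)).
Hypotheses (Hctrb : controllable A B) (HGF : ext_dyn A B C D G F)
  (Hdata : is_traj A B C D N ud yd) (HQ : posdef Qw) (HR : posdef Rw) (HL : (1 <= L)%N)
  (HP : posdef P) (HA3 : pers_exc N (L + l + n) ud)
  (HA1 : forall xi, Xf xi ->
     let xs := ext_ss l us ys in
     let u := us + K *m (xi - xs) in
     let y := Ct G F *m xi + D *m u in
     [/\ Xf (At G F *m xi + Bt l D *m u),
         U u /\ Y y &
         qf P ((At G F + Bt l D *m K) *m (xi - xs))
           <= qf P (xi - xs) - qf (K^T *m Rw *m K) (xi - xs) - qf Qw (y - ys)]).

Local Notation xs := (ext_ss l us ys).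
Local Notation cost := (ocp_cost L us ys Qw Rw P).
Local Notation fsol := (ocp_feasible_sol L N ud yd U Y Xf).
Local Notation feas := (ocp_feasible L N ud yd U Y Xf).
Local Notation V := (ocp_value L N ud yd U Y us ys Qw Rw P Xf).
Local Notation stage u y := (qf Rw (u - us) + qf Qw (y - ys)).

Lemma cost_ge0 ub yb : 0 <= cost ub yb.
Proof.
rewrite /ocp_cost; apply: addr_ge0; last exact: qf_ge0.
by apply: sumr_ge0 => k _; apply: addr_ge0; apply: qf_ge0.
Qed.

Lemma value_le xi al ub yb : fsol xi al ub yb -> V xi <= cost ub yb.
Proof.
move=> H; have := @ge_inf R [set c | exists alpha ub yb, fsol xi alpha ub yb /\ c = cost ub yb].
apply.
  by exists 0 => c [a [u' [y' [_ ->]]]]; apply: cost_ge0.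
by exists al, ub, yb.
Qed.

Lemma value_opt xi al ub yb : ocp_optimal_sol L N ud yd U Y us ys Qw Rw P Xf xi al ub yb ->
  V xi = cost ub yb.
Proof.
move=> [H1 H2]; apply/le_anti; rewrite (value_le H1) /=.
apply: lb_le_inf; first by exists (cost ub yb), al, ub, yb.
by move=> c [a [u' [y' [H ->]]]]; apply: H2 H.
Qed.

Lemma LlN : (L + l <= N)%N.
Proof. case: HA3 => h _; lia. Qed.

Lemma feas_traj xi al ub yb : fsol xi al ub yb ->
  exists xb : nat -> 'cV[R]_n,
    (forall j, (j.+1 < L + l)%N -> xb j.+1 = A *m xb j + B *m ub j) /\
    (forall j, (j < L + l)%N -> yb j = C *m xb j + D *m ub j).
Proof.
move=> [Hsu Hsy _ _ _]; rewrite hankel_mul in Hsu; rewrite hankel_mul in Hsy.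
have [xd [Hyd Hxd]] := Hdata.
have Eu : forall j, (j < L + l)%N -> ub j = comb al ud j.
  by move=> j jT; have := seg_inj Hsu jT; rewrite !add0n.
have Ey : forall j, (j < L + l)%N -> yb j = comb al yd j.
  by move=> j jT; have := seg_inj Hsy jT; rewrite !add0n.
have [Cx Cy] := comb_traj al LlN Hyd Hxd.
exists (comb al xd); split => j jT.
  by rewrite Cx // Eu //; lia.
by rewrite Ey // Cy // Eu.
Qed.

Lemma sol_of_traj xi (ub : nat -> 'cV[R]_m) (yb : nat -> 'cV[R]_p) (xb : nat -> 'cV[R]_n) :
  (forall j, (j.+1 < L + l)%N -> xb j.+1 = A *m xb j + B *m ub j) ->
  (forall j, (j < L + l)%N -> yb j = C *m xb j + D *m ub j) ->
  ext_state l ub yb 0 = xi -> Xf (ext_state l ub yb L) ->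
  (forall k, (k < L)%N -> U (ub (l + k)%N) /\ Y (yb (l + k)%N)) ->
  exists al, fsol xi al ub yb.
Proof.
move=> Hx Hy Hxi HXf Hc.
have T0 : (0 < L + l)%N by lia.
have HA3' : pers_exc N ((L + l) + n) ud by [].
have [al Hal] := FL T0 Hctrb Hdata HA3' Hx Hy.
exists al; split => //; rewrite hankel_mul; apply: seg_eq => i /=;
  rewrite add0n; by case: (Hal i (ltn_ord i)).
Qed.


Lemma ys_eq : Xf xs -> Ct G F *m xs + D *m us = ys.
Proof.
move=> Xs; have [_ _] := HA1 Xs.
rewrite !subrr !mulmx0 addr0 !qf0 subrr sub0r oppr_ge0 => H.
by apply/eqP; rewrite -subr_eq0; apply/eqP; apply: qf_le0 HQ H.
Qed.

Lemma xs_fix : Ct G F *m xs + D *m us = ys -> At G F *m xs + Bt l D *m us = xs.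
Proof.
move=> H.
have := @At_mul R l m p G F D (fun _ => us) (fun _ => ys) 0%N; rewrite /= add0n => ->.
  by apply: ext_state_eq.
exact: esym H.
Qed.

Lemma step (u : nat -> 'cV[R]_m) (y : nat -> 'cV[R]_p) (x : nat -> 'cV[R]_n) t al ub yb :
  (forall j, x j.+1 = A *m x j + B *m u j) -> (forall j, y j = C *m x j + D *m u j) ->
  Ct G F *m xs + D *m us = ys ->
  ocp_optimal_sol L N ud yd U Y us ys Qw Rw P Xf (ext_state l u y t) al ub yb ->
  u (l + t)%N = ub l ->
  [/\ y (l + t)%N = yb l, U (u (l + t)%N) /\ Y (y (l + t)%N), feas (ext_state l u y t.+1)
    & V (ext_state l u y t.+1) <= cost ub yb - stage (u (l + t)%N) (y (l + t)%N)].
Proof.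
move=> Hxcl Hycl Hys [Hf Hopt] Hul.
have [xb [Hxb Hyb]] := feas_traj Hf.
case: (Hf) => [Hsu Hsy Hxi HXfL Hc].
have Hpast := ext_state_inj Hxi.
have Hyl : y (l + t)%N = yb l.
  have tr1 : is_traj A B C D (L + l) ub yb by exists xb; split.
  have e1 := HGF tr1 (leqnn l) (ltac:(lia) : (l < L + l)%N).
  have tr2 : is_traj A B C D l.+1 (fun k => u (t + k)%N) (fun k => y (t + k)%N).
    by exists (fun k => x (t + k)%N); split => k _; [rewrite Hycl | rewrite addnS Hxcl].
  have e2 := HGF tr2 (leqnn l) (ltnSn l); rewrite /= in e2.
  rewrite (addnC l t) e2 e1 (addnC t l) Hul.
  congr (_ + _ + _); apply: eq_bigr => i _;
    (have hi : (l - i.+1 < l)%N by have := ltn_ord i; lia);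
    case: (Hpast _ hi); rewrite add0n => eu ey; by rewrite ?eu ?ey.

have Hcons : U (u (l + t)%N) /\ Y (y (l + t)%N).
  by have := Hc 0%N HL; rewrite addn0 Hul Hyl.
set T := (L + l)%N.
have T1 : (l < T)%N by rewrite /T; lia.
set xiL := ext_state l ub yb L.
set un := us + K *m (xiL - xs).
set xT := A *m xb T.-1 + B *m ub T.-1.
set ynew := C *m xT + D *m un.
have Hynew : ynew = Ct G F *m xiL + D *m un.
  pose ue k := if (k < T)%N then ub k else un.
  pose xe k := if (k < T)%N then xb k else xT.
  pose ye k := if (k < T)%N then yb k else ynew.
  have tr3 : is_traj A B C D T.+1 ue ye.
    exists xe; split => k kT.
      rewrite /ue /xe /ye; case: ltnP => h //; by rewrite Hyb.
    rewrite /ue /xe /ye (_ : (k < T)%N = true); last by apply/idP; lia.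
    case: ltnP => h; first by rewrite Hxb.
    by rewrite /xT (_ : k = T.-1) //; lia.
  have e3 := HGF tr3 (ltnW T1) (ltnSn T).
  rewrite /ye /ue ltnn in e3; rewrite e3 Ct_mul /xiL.
  congr (_ + _ + _); apply: eq_bigr => i _; rewrite ifT /T //; have := ltn_ord i; lia.
pose ub' k := if (k < T.-1)%N then ub k.+1 else un.
pose xb' k := if (k < T.-1)%N then xb k.+1 else xT.
pose yb' k := if (k < T.-1)%N then yb k.+1 else ynew.
have Hxb' : forall j, (j.+1 < T)%N -> xb' j.+1 = A *m xb' j + B *m ub' j.
  move=> j jT; rewrite /xb' /ub' (_ : (j < T.-1)%N = true); last by apply/idP; lia.
  case: ltnP => h; first by rewrite Hxb //; lia.
  by rewrite /xT (_ : T.-1 = j.+1) //; lia.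
have Hyb' : forall j, (j < T)%N -> yb' j = C *m xb' j + D *m ub' j.
  move=> j jT; rewrite /xb' /ub' /yb'; case: ltnP => h //; rewrite Hyb //; lia.
have Hxi' : ext_state l ub' yb' 0 = ext_state l u y t.+1.
  apply: ext_state_eq => i il; rewrite add0n /ub' /yb'.
  have hT : (i < T.-1)%N by rewrite /T; lia.
  rewrite hT; case: (ltnP i.+1 l) => h.
    by case: (Hpast _ h); rewrite add0n addSnnS => -> ->.
  have -> : i.+1 = l by lia.
  have -> : (t.+1 + i = l + t)%N by lia.
  by rewrite Hyl -Hul.
pose ue k := if (k < T)%N then ub k else un.
pose ye k := if (k < T)%N then yb k else Ct G F *m xiL + D *m un.
have EL : ext_state l ue ye L = xiL.
  apply: ext_state_eq => i il; rewrite /ue /ye.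
  have -> : (L + i < T)%N by rewrite /T; lia.
  by [].
have Eterm : ext_state l ub' yb' L = At G F *m xiL + Bt l D *m un.
  have := @At_mul R l m p G F D ue ye L; rewrite EL.
  rewrite {1 2}/ue {1}/ye ltnn => ->; last by [].
  rewrite addn1; apply: ext_state_eq => i il; rewrite /ub' /yb' /ue /ye.
  case: ltnP => h.
    have -> : (L.+1 + i < T)%N by rewrite /T; lia.
    by rewrite addSn.
  have -> : (L.+1 + i < T)%N = false by apply/negbTE; rewrite -leqNgt /T; lia.
  by rewrite Hynew.
have [HXf' [HU' HY'] Hdec] := HA1 HXfL.
rewrite -/un -Hynew in HY' Hdec.
have [al' Hsol'] : exists al', fsol (ext_state l u y t.+1) al' ub' yb'.
  apply: sol_of_traj Hxb' Hyb' Hxi' _ _; first by rewrite Eterm.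
  move=> k kL; rewrite /ub' /yb'; case: ltnP => h.
    by rewrite -addnS; apply: Hc; lia.
  by [].
split => //; first by exists al', ub', yb'.
apply: (le_trans (value_le Hsol')).
rewrite Hul Hyl /ocp_cost Eterm.
rewrite (sum_first (fun k => qf Rw (ub (l + k)%N - us) + qf Qw (yb (l + k)%N - ys)) HL).
rewrite (sum_last (fun k => qf Rw (ub' (l + k)%N - us) + qf Qw (yb' (l + k)%N - ys)) HL).
have Emid : \sum_(k < L.-1) (qf Rw (ub' (l + k)%N - us) + qf Qw (yb' (l + k)%N - ys))
          = \sum_(k < L.-1) (qf Rw (ub (l + k.+1)%N - us) + qf Qw (yb (l + k.+1)%N - ys)).
  apply: eq_bigr => k _; rewrite /ub' /yb'.
  have -> : (l + k < T.-1)%N by have := ltn_ord k; rewrite /T; lia.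
  by rewrite addnS.
rewrite Emid addn0 /ub' /yb'.
have -> : (l + L.-1 < T.-1)%N = false by apply/negbTE; rewrite -leqNgt /T; lia.
have Eun : un - us = K *m (xiL - xs) by rewrite /un addrC addKr.
have Exs := xs_fix Hys.
have Et : At G F *m xiL + Bt l D *m un - xs = (At G F + Bt l D *m K) *m (xiL - xs).
  rewrite -{1}Exs opprD addrACA -mulmxBr -mulmxBr Eun mulmxDl mulmxA //.
rewrite Et; rewrite qf_KRK -Eun in Hdec.
set s1 := \sum_(k < L.-1) _.
move: Hdec; set q1 := qf P _; set q2 := qf P _; set q3 := qf Rw _; set q4 := qf Qw _.
move=> Hdec; rewrite -/xiL.
lra.
Qed.

Lemma main_result (HXfint : in_interior Xf xs) (lpos : (0 < l)%N) (cu : R) (Hcu : 0 < cu)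
  (HA2 : forall xi, feas xi -> V xi <= cu * sqnorm (xi - xs)) :
  exists (c gamma : R), [/\ 0 < c, 0 < gamma, gamma < 1 &
    forall (u : nat -> 'cV[R]_m) (y : nat -> 'cV[R]_p) (x : nat -> 'cV[R]_n),
      (forall j, x j.+1 = A *m x j + B *m u j) ->
      (forall j, y j = C *m x j + D *m u j) ->
      (forall t, feas (ext_state l u y t) ->
         exists alpha ub yb,
           ocp_optimal_sol L N ud yd U Y us ys Qw Rw P Xf (ext_state l u y t) alpha ub yb
           /\ u (l + t)%N = ub l) ->
      feas (ext_state l u y 0) ->
      [/\ forall t, feas (ext_state l u y t),
          forall t, U (u (l + t)%N) /\ Y (y (l + t)%N) &
          forall t, sqnorm (ext_state l u y t - xs)
                    <= c * gamma ^+ t * sqnorm (ext_state l u y 0 - xs)]].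
Proof.
have [lR lR0 HlR] := pd_lb HR.
have [lQ lQ0 HlQ] := pd_lb HQ.
set lam := Num.min lR lQ.
have lam0 : 0 < lam by rewrite lt_min lR0 lQ0.
have [c [gamma [c0 g0 g1 Hstab]]] := stab lpos lam0 Hcu.
exists c, gamma; split => // u y x Hx Hy Hmpc Hf0.
have Xs : Xf xs.
  by case: HXfint => e e0 He; apply: He => i; rewrite subrr normr0.
have Hys := ys_eq Xs.
have Hfeas : forall t, feas (ext_state l u y t).
  elim => // t IH.
  have [al [ub [yb [Hopt Hul]]]] := Hmpc t IH.
  by case: (step Hx Hy Hys Hopt Hul).
have Hst : forall t, [/\ U (u (l + t)%N) /\ Y (y (l + t)%N), 0 <= V (ext_state l u y t) &
   V (ext_state l u y t.+1) <= V (ext_state l u y t) - stage (u (l + t)%N) (y (l + t)%N)].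
  move=> t; have [al [ub [yb [Hopt Hul]]]] := Hmpc t (Hfeas t).
  have [_ Hc _ Hv] := step Hx Hy Hys Hopt Hul.
  rewrite (value_opt Hopt); split => //; exact: cost_ge0.
pose e j := sqnorm (u j - us) + sqnorm (y j - ys).
have HS : forall t, sqnorm (ext_state l u y t - xs) = \sum_(i < l) e (t + i)%N.
  by move=> t; rewrite ext_state_sub sqnorm_ext_state.
have e0 : forall j, 0 <= e j by move=> j; apply: addr_ge0; apply: sqnorm_ge0.
have V0 : forall t, 0 <= V (ext_state l u y t) by move=> t; case: (Hst t).
have Vdec : forall t, V (ext_state l u y t.+1) <= V (ext_state l u y t) - lam * e (l + t)%N.
  move=> t; case: (Hst t) => _ _ H; apply: (le_trans H); rewrite lerD2l lerN2.
  rewrite /e mulrDr; apply: lerD.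
    apply: le_trans (HlR _); apply: ler_wpM2r; [exact: sqnorm_ge0 | by rewrite ge_min lexx].
  apply: le_trans (HlQ _); apply: ler_wpM2r; [exact: sqnorm_ge0 | by rewrite ge_min lexx orbT].
have Vub : forall t, V (ext_state l u y t) <= cu * \sum_(i < l) e (t + i)%N.
  by move=> t; rewrite -HS; apply: HA2.
have Hb := Hstab _ _ e0 V0 Vdec Vub.
split => // t; first by case: (Hst t).
rewrite !HS; apply: (le_trans (Hb t)).
by under [X in _ <= _ * X]eq_bigr => i _ do rewrite add0n.
Qed.


End Main.

Unset Implicit Arguments.

Theorem theorem2 (R : realType) (n m p : nat)
  (A : 'M[R]_n) (B : 'M[R]_(n, m)) (C : 'M[R]_(p, n)) (D : 'M[R]_(p, m))
  (Hctrb : controllable A B) (Hobsv : observable A C)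
  (lg l : nat) (Hlag : is_lag A C lg) (Hl : (lg <= l)%N)
  (G : 'I_l -> 'M[R]_(p, m)) (F : 'I_l -> 'M[R]_(p, p)) (HGF : ext_dyn A B C D G F)
  (N : nat) (ud : nat -> 'cV[R]_m) (yd : nat -> 'cV[R]_p) (Hdata : is_traj A B C D N ud yd)
  (U : set 'cV[R]_m) (Y : set 'cV[R]_p) (us : 'cV[R]_m) (ys : 'cV[R]_p)
  (Heq : is_equilibrium A B C D lg us ys)
  (Hint : in_interior [set v : 'cV[R]_(m + p) | U (usubmx v) /\ Y (dsubmx v)] (col_mx us ys))
  (Qw : 'M[R]_p) (Rw : 'M[R]_m) (HQ : posdef Qw) (HR : posdef Rw)
  (L : nat) (HL : (1 <= L)%N)
  (P : 'M[R]_(l * m + l * p)) (K : 'M[R]_(m, l * m + l * p)) (Xf : set 'cV[R]_(l * m + l * p))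
  (HP : posdef P)
  (HXf : forall xi, Xf xi -> in_UlYl U Y xi)
  (HXfint : in_interior Xf (ext_ss l us ys))
  (HA1 : forall xi, Xf xi ->
     let xs := ext_ss l us ys in
     let u := us + K *m (xi - xs) in
     let y := Ct G F *m xi + D *m u in
     [/\ Xf (At G F *m xi + Bt l D *m u),
         U u /\ Y y &
         qf P ((At G F + Bt l D *m K) *m (xi - xs))
           <= qf P (xi - xs) - qf (K^T *m Rw *m K) (xi - xs) - qf Qw (y - ys)])
  (cu : R) (Hcu : 0 < cu)
  (HA2 : forall xi, ocp_feasible L N ud yd U Y Xf xi ->
     ocp_value L N ud yd U Y us ys Qw Rw P Xf xi <= cu * sqnorm (xi - ext_ss l us ys))
  (HA3 : pers_exc N (L + l + n) ud) :
  exists (c gamma : R), [/\ 0 < c, 0 < gamma, gamma < 1 &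
    forall (u : nat -> 'cV[R]_m) (y : nat -> 'cV[R]_p) (x : nat -> 'cV[R]_n),
      (* closed-loop system; time t of the paper is index t + l here *)
      (forall j, x j.+1 = A *m x j + B *m u j) ->
      (forall j, y j = C *m x j + D *m u j) ->
      (* MPC law: u_t = bar u_0^*(t) for an optimal solution whenever the problem is feasible *)
      (forall t, ocp_feasible L N ud yd U Y Xf (ext_state l u y t) ->
         exists alpha ub yb,
           ocp_optimal_sol L N ud yd U Y us ys Qw Rw P Xf (ext_state l u y t) alpha ub yb
           /\ u (l + t)%N = ub l) ->
      (* initial feasibility *)
      ocp_feasible L N ud yd U Y Xf (ext_state l u y 0) ->
      [/\ forall t, ocp_feasible L N ud yd U Y Xf (ext_state l u y t),
          forall t, U (u (l + t)%N) /\ Y (y (l + t)%N) &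
          forall t, sqnorm (ext_state l u y t - ext_ss l us ys)
                    <= c * gamma ^+ t * sqnorm (ext_state l u y 0 - ext_ss l us ys)]].
Proof.
have lpos : (0 < l)%N.
  by case: Hlag => /andP [h1 _] _ _; exact: leq_trans h1 Hl.
exact: (main_result Hctrb HGF Hdata HQ HR HL HP HA3 HA1 HXfint lpos Hcu HA2).
Qed.
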